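(* Let $M$ be a positive integer, $q\in(q_{KL},M+1]$, and let $x_1\dots x_N$ be a word occurring in some sequence of $\mathbf V_q$. Let $(p_n)\subset(1,M+1]$ be an increasing sequence converging to $q$ such that $\alpha(p_n)\in\mathbf V$ for every $n\ge1$. Then $x_1\dots x_N$ occurs in some sequence of $\mathbf V_{p_n}$ for all sufficiently large $n$.
   Context: Fix a positive integer $M$; all sequences have digits in $\{0,1,\dots,M\}$. For $q\in(1,M+1]$, $\alpha(q)$ is the quasi-greedy $q$-expansion of $1$ (lexicographically largest sequence $(a_i)$ not ending in $0^\infty$ with $\sum a_iq^{-i}=1$). Sequences are compared lexicographically; $\overline{(x_i)}=(M-x_1)(M-x_2)\dots$; $\sigma$ is the left shift. $\mathbf V_q$ is the set of $(x_i)$ with $\overline{\alpha(q)}\preccurlyeq\sigma^n((x_i))\preccurlyeq\alpha(q)$ for all $n\ge0$. $\mathbf V$ is the set of sequences $(a_i)$ with $\overline{(a_i)}\preccurlyeq\sigma^n((a_i))\preccurlyeq(a_i)$ for all $n\ge0$. $(\tau_i)_{i\ge0}$ is the Thue–Morse sequence; $q_{KL}$ is the base with $\alpha(q_{KL})=\lambda_1\lambda_2\dots$, $\lambda_i=k+\tau_i-\tau_{i-1}$ if $M=2k$, $\lambda_i=k+\tau_i$ if $M=2k+1$. *)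

(* Defs.v *)
From Stdlib Require Import Reals Lra Lia Arith List ClassicalEpsilon.
Open Scope R_scope.

(* Sequences (x_1 x_2 ...) are functions nat -> nat, 0-based: x i = x_{i+1}. *)
Definition digit_seq (M : nat) (x : nat -> nat) : Prop := forall i, (x i <= M)%nat.

Definition expansion_of_one (q : R) (x : nat -> nat) : Prop :=
  infinite_sum (fun i => INR (x i) / q ^ (S i)) 1.

Definition not_ending_zero (x : nat -> nat) : Prop :=
  forall n, exists m, (n <= m)%nat /\ x m <> 0%nat.

Definition lex_lt (x y : nat -> nat) : Prop :=
  exists n, (forall i, (i < n)%nat -> x i = y i) /\ (x n < y n)%nat.

Definition lex_le (x y : nat -> nat) : Prop :=
  (forall i, x i = y i) \/ lex_lt x y.

Definition refl (M : nat) (x : nat -> nat) : nat -> nat := fun i => (M - x i)%nat.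

Definition shift (n : nat) (x : nat -> nat) : nat -> nat := fun i => x (n + i)%nat.

Definition is_quasi_greedy (M : nat) (q : R) (a : nat -> nat) : Prop :=
  digit_seq M a /\ not_ending_zero a /\ expansion_of_one q a /\
  forall b, digit_seq M b -> not_ending_zero b -> expansion_of_one q b -> lex_le b a.

Definition alpha (M : nat) (q : R) : nat -> nat :=
  epsilon (inhabits (fun _ => 0%nat)) (is_quasi_greedy M q).

Definition Vq (M : nat) (q : R) (x : nat -> nat) : Prop :=
  digit_seq M x /\
  forall n, lex_le (refl M (alpha M q)) (shift n x) /\ lex_le (shift n x) (alpha M q).

Definition Vset (M : nat) (a : nat -> nat) : Prop :=
  digit_seq M a /\
  forall n, lex_le (refl M a) (shift n a) /\ lex_le (shift n a) a.

(* Thue-Morse: tau n = parity of number of 1's in the binary expansion of n *)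
Fixpoint tau_aux (fuel n : nat) : nat :=
  match fuel with
  | O => O
  | S f => match n with
           | O => O
           | _ => ((n mod 2) + tau_aux f (n / 2)) mod 2
           end
  end.
Definition tau (n : nat) : nat := tau_aux n n.

(* lambda_{i+1} (0-based): M = 2k: k + tau_{i+1} - tau_i ; M = 2k+1: k + tau_{i+1} *)
Definition lambdaKL (M : nat) (i : nat) : nat :=
  if Nat.even M then (M / 2 + tau (S i) - tau i)%nat else (M / 2 + tau (S i))%nat.

Definition occurs_in (w : list nat) (y : nat -> nat) : Prop :=
  exists k, forall i, (i < length w)%nat -> y (k + i)%nat = nth i w 0%nat.

(* Main.v *)
Require Import Defs.
From Stdlib Require Import Reals Lra Lia Arith List ClassicalEpsilon.
From Stdlib Require Import Classical FunctionalExtensionality.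
Open Scope R_scope.

Fixpoint PS (q : R) (x : nat -> nat) (n : nat) : R :=
  match n with O => 0 | S k => PS q x k + INR (x k) / q ^ (S k) end.

Lemma sum_PS q x n : sum_f_R0 (fun i => INR (x i) / q ^ (S i)) n = PS q x (S n).
Proof. induction n; simpl in *. - lra. - rewrite IHn. simpl. lra. Qed.

Lemma inf_PS q x l : infinite_sum (fun i => INR (x i) / q ^ (S i)) l ->
  forall eps, eps > 0 -> exists N, forall n, (n >= N)%nat -> Rabs (PS q x n - l) < eps.
Proof.
  intros H eps He. destruct (H eps He) as [N HN]. exists (S N). intros n Hn.
  destruct n as [|n]; [lia|]. rewrite <- sum_PS. apply HN. lia.
Qed.

Lemma PS_inf q x l : (forall eps, eps > 0 -> exists N, forall n, (n >= N)%nat -> Rabs (PS q x n - l) < eps) ->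
  infinite_sum (fun i => INR (x i) / q ^ (S i)) l.
Proof.
  intros H eps He. destruct (H eps He) as [N HN]. exists N. intros n Hn.
  unfold R_dist. rewrite sum_PS. apply HN. lia.
Qed.

Lemma term_nonneg q (x:nat->nat) i k : q > 0 -> 0 <= INR (x i) / q ^ k.
Proof. intros. unfold Rdiv. apply Rmult_le_pos. apply pos_INR. left. apply Rinv_0_lt_compat, pow_lt; auto. Qed.

Lemma PS_mono q x m n : q > 0 -> (m <= n)%nat -> PS q x m <= PS q x n.
Proof.
  intros Hq H. induction H. lra. simpl.
  assert (0 <= INR (x m0) / (q * q ^ m0)). { change (q * q^m0) with (q ^ S m0). apply term_nonneg; auto. }
  lra.
Qed.

Lemma PS_le_lim q x l n : q > 0 -> infinite_sum (fun i => INR (x i) / q ^ (S i)) l -> PS q x n <= l.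
Proof.
  intros Hq H. apply Rnot_lt_le. intro Hlt.
  destruct (inf_PS q x l H (PS q x n - l)) as [N HN]. lra.
  specialize (HN (max n N) ltac:(lia)).
  pose proof (PS_mono q x n (max n N) Hq ltac:(lia)).
  apply Rabs_def2 in HN. lra.
Qed.

Lemma PS_ext q x y n : (forall i, (i < n)%nat -> x i = y i) -> PS q x n = PS q y n.
Proof.
  induction n; intros H; simpl. auto. rewrite IHn by (intros; apply H; lia). rewrite H by lia. auto.
Qed.

Lemma PS_base_mono p q x n : 0 < p <= q -> PS q x n <= PS p x n.
Proof.
  intros Hp. induction n; simpl. lra.
  apply Rplus_le_compat; auto. unfold Rdiv. apply Rmult_le_compat_l. apply pos_INR.
  apply Rinv_le_contravar. apply Rmult_lt_0_compat. lra. apply pow_lt; lra.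
  apply Rmult_le_compat; try lra. left; apply pow_lt; lra. apply pow_incr; lra.
Qed.

Fixpoint best (y : R) (k : nat) : nat :=
  match k with O => O | S k' => if Rlt_dec (INR (S k')) y then S k' else best y k' end.

Lemma best_le y k : (best y k <= k)%nat.
Proof. induction k; simpl. lia. destruct (Rlt_dec _ _); lia. Qed.

Lemma best_lt y k : 0 < y -> INR (best y k) < y.
Proof. intros. induction k; simpl. lra. destruct (Rlt_dec _ _); auto. Qed.

Lemma best_max y k : (best y k < k)%nat -> y <= INR (S (best y k)).
Proof.
  induction k; cbn [best]; intros H. lia.
  destruct (Rlt_dec (INR (S k)) y). lia.
  destruct (Nat.eq_dec (best y k) k) as [E|E].
  - rewrite E. apply Rnot_lt_le in n. exact n.
  - apply IHk. pose proof (best_le y k). lia.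
Qed.

Fixpoint rho (M : nat) (q : R) (k : nat) : R :=
  match k with O => 1 | S k' => q * rho M q k' - INR (best (q * rho M q k') M) end.
Definition dig M q k := best (q * rho M q k) M.

Lemma rho_S M q k : rho M q (S k) = q * rho M q k - INR (dig M q k).
Proof. reflexivity. Qed.

Lemma rho_pos M q k : q > 0 -> 0 < rho M q k.
Proof.
  intros Hq. induction k. simpl; lra. rewrite rho_S. unfold dig.
  pose proof (best_lt (q * rho M q k) M ltac:(apply Rmult_lt_0_compat; lra)). lra.
Qed.

Lemma rho_le1 M q k : 1 < q <= INR M + 1 -> rho M q k <= 1.
Proof.
  intros Hq. induction k. simpl; lra. rewrite rho_S. unfold dig.
  destruct (Nat.lt_ge_cases (best (q * rho M q k) M) M) as [L|L].
  - apply best_max in L. rewrite S_INR in L. lra.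
  - pose proof (best_le (q * rho M q k) M). assert (best (q * rho M q k) M = M) as E by lia.
    rewrite E. assert (q * rho M q k <= q * 1) by (apply Rmult_le_compat_l; lra). lra.
Qed.

Lemma PS_dig M q k : q > 0 -> 1 - PS q (dig M q) k = rho M q k / q ^ k.
Proof.
  intros Hq. induction k. simpl. field.
  rewrite rho_S. 
  assert (q ^ k <> 0) by (apply pow_nonzero; lra).
  assert (E: 1 - PS q (dig M q) (S k) = (1 - PS q (dig M q) k) - INR (dig M q k) / q ^ S k) by (simpl; ring).
  rewrite E, IHk. simpl. field. split; lra.
Qed.

Lemma rho_shift M q n j : (forall m, (n <= m)%nat -> dig M q m = 0%nat) ->
  rho M q (j + n) = q ^ j * rho M q n.
Proof.
  intros H. induction j. simpl. ring.
  replace (S j + n)%nat with (S (j + n)) by lia. rewrite rho_S, H by lia. rewrite IHj. simpl. ring.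
Qed.

Lemma dig_nez M q : 1 < q <= INR M + 1 -> not_ending_zero (dig M q).
Proof.
  intros Hq n. apply NNPP. intro H.
  assert (H0 : forall m, (n <= m)%nat -> dig M q m = 0%nat).
  { intros m Hm. apply NNPP. intro. apply H. exists m. auto. }
  pose proof (rho_pos M q n ltac:(lra)).
  destruct (Pow_x_infinity q ltac:(rewrite Rabs_right; lra) (2 / rho M q n)) as [N HN].
  specialize (HN N (le_n _)). rewrite Rabs_right in HN by (left; apply pow_lt; lra).
  pose proof (rho_le1 M q (N + n) Hq). rewrite rho_shift in H2 by auto.
  assert (q ^ N * rho M q n >= 2 / rho M q n * rho M q n).
  { apply Rle_ge, Rmult_le_compat_r; lra. }
  replace (2 / rho M q n * rho M q n) with 2 in H3 by (field; lra). lra.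
Qed.

Lemma dig_sum M q : 1 < q <= INR M + 1 -> expansion_of_one q (dig M q).
Proof.
  intros Hq. unfold expansion_of_one. apply PS_inf. intros eps He.
  destruct (Pow_x_infinity q ltac:(rewrite Rabs_right; lra) (2 / eps)) as [N HN].
  exists N. intros n Hn. specialize (HN n Hn). rewrite Rabs_right in HN by (left; apply pow_lt; lra).
  pose proof (PS_dig M q n ltac:(lra)). pose proof (rho_pos M q n ltac:(lra)).
  pose proof (rho_le1 M q n Hq). pose proof (pow_lt q n ltac:(lra)).
  rewrite Rabs_minus_sym, Rabs_right.
  2: { rewrite H. apply Rle_ge. unfold Rdiv. apply Rmult_le_pos; [lra|]. left; apply Rinv_0_lt_compat; lra. }
  rewrite H. apply Rle_lt_trans with (1 / q ^ n).
  { unfold Rdiv. apply Rmult_le_compat_r. left; apply Rinv_0_lt_compat; lra. lra. }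
  apply Rle_lt_trans with (eps / 2); [|lra].
  assert (2 / eps * eps <= q ^ n * eps) by (apply Rmult_le_compat_r; lra).
  replace (2 / eps * eps) with 2 in H3 by (field; lra).
  apply Rmult_le_reg_r with (q ^ n * 2); [nra|]. field_simplify; try lra. 
Qed.

Lemma least (P : nat -> Prop) n : P n -> exists m, P m /\ forall j, (j < m)%nat -> ~ P j.
Proof.
  revert n. intro n. induction n as [n IH] using lt_wf_ind. intros Hn.
  destruct (classic (exists j, (j < n)%nat /\ P j)) as [[j [Hj Pj]]|H].
  - exact (IH j Hj Pj).
  - exists n. split; auto. intros j Hj Pj. apply H. eauto.
Qed.

Lemma trich (x y : nat -> nat) : (forall i, x i = y i) \/ lex_lt x y \/ lex_lt y x.
Proof.
  destruct (classic (forall i, x i = y i)) as [H|H]. auto.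
  apply not_all_ex_not in H. destruct H as [i Hi].
  destruct (least (fun i => x i <> y i) i Hi) as [m [Hm Hl]].
  assert (Ha : forall j, (j < m)%nat -> x j = y j).
  { intros j Hj. apply NNPP. apply Hl. auto. }
  destruct (Nat.lt_gt_cases (x m) (y m)) as [[L|L] _]; auto; [idtac | idtac].
  - right; left. exists m. auto.
  - right; right. exists m. split; auto. intros j Hj. symmetry; auto.
Qed.

Lemma lex_lt_asym x y : lex_lt x y -> lex_lt y x -> False.
Proof.
  intros [n [Hn Ln]] [m [Hm Lm]].
  destruct (Nat.lt_trichotomy n m) as [L|[L|L]].
  - rewrite Hm in Ln by auto. lia.
  - subst. lia.
  - rewrite Hn in Lm by auto. lia.
Qed.

Lemma lex_lt_irr x y : lex_lt x y -> (forall i, x i = y i) -> False.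
Proof. intros [n [_ Ln]] H. rewrite H in Ln. lia. Qed.

Lemma lex_antisym x y : lex_le x y -> lex_le y x -> forall i, x i = y i.
Proof.
  intros [H|H] [H'|H']; auto.
  exfalso. eapply lex_lt_asym; eauto.
Qed.

Lemma dig_max M q c : 1 < q <= INR M + 1 -> digit_seq M c -> not_ending_zero c ->
  expansion_of_one q c -> lex_le c (dig M q).
Proof.
  intros Hq Dc Nc Ec.
  destruct (trich c (dig M q)) as [H|[H|H]]. left; auto. right; auto.
  exfalso. destruct H as [k [Hk Lk]].
  assert (Hd : (dig M q k < M)%nat) by (specialize (Dc k); lia).
  unfold dig in Hd. apply best_max in Hd. fold (dig M q k) in Hd.
  assert (Hc : INR (S (dig M q k)) <= INR (c k)) by (apply le_INR; lia).
  pose proof (PS_dig M q k ltac:(lra)).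
  assert (E1 : PS q c k = PS q (dig M q) k) by (apply PS_ext; intros; symmetry; auto).
  assert (P1 : PS q c (S k) >= 1).
  { simpl. rewrite E1. pose proof (pow_lt q k ltac:(lra)).
    assert (INR (c k) / (q * q ^ k) >= rho M q k / q ^ k).
    { apply Rle_ge. apply Rmult_le_reg_r with (q * q ^ k). nra.
      field_simplify; try lra. }
    lra. }
  destruct (Nc (S k)) as [m [Hm Cm]].
  pose proof (PS_mono q c (S k) m ltac:(lra) Hm).
  pose proof (PS_le_lim q c 1 (S m) ltac:(lra) Ec).
  simpl in H1.
  assert (0 < INR (c m) / (q * q ^ m)).
  { apply Rdiv_lt_0_compat. apply lt_0_INR; lia. pose proof (pow_lt q m ltac:(lra)). nra. }
  lra.
Qed.

Lemma dig_qg M q : 1 < q <= INR M + 1 -> is_quasi_greedy M q (dig M q).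
Proof.
  intros Hq. split; [|split; [|split]].
  - intro i. apply best_le.
  - apply dig_nez; auto.
  - apply dig_sum; auto.
  - intros b Db Nb Eb. apply dig_max; auto.
Qed.

Lemma alpha_qg M q : 1 < q <= INR M + 1 -> is_quasi_greedy M q (alpha M q).
Proof. intros Hq. unfold alpha. apply epsilon_spec. exists (dig M q). apply dig_qg; auto. Qed.

Lemma alpha_eq M q : 1 < q <= INR M + 1 -> forall i, alpha M q i = dig M q i.
Proof.
  intros Hq. destruct (alpha_qg M q Hq) as [D [N [E Mx]]].
  destruct (dig_qg M q Hq) as [D' [N' [E' Mx']]].
  apply lex_antisym. apply Mx'; auto. apply Mx; auto.
Qed.

Lemma alpha_tail M q k : 1 < q <= INR M + 1 -> 1 - PS q (alpha M q) k <= / q ^ k.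
Proof.
  intros Hq. rewrite (PS_ext q (alpha M q) (dig M q)) by (intros; apply alpha_eq; auto).
  rewrite PS_dig by lra. pose proof (rho_le1 M q k Hq). pose proof (pow_lt q k ltac:(lra)).
  unfold Rdiv. rewrite <- (Rmult_1_l (/ q ^ k)) at 2. apply Rmult_le_compat_r; auto.
  left; apply Rinv_0_lt_compat; auto.
Qed.

Lemma upper M p q m : 1 < p -> p < q -> q <= INR M + 1 ->
  (forall i, (i < m)%nat -> alpha M p i = alpha M q i) -> (alpha M p m <= alpha M q m)%nat.
Proof.
  intros Hp Hpq Hq Ha. apply Nat.nlt_ge. intro L.
  set (b := alpha M p) in *. set (a := alpha M q) in *.
  pose proof (alpha_tail M q (S m) ltac:(lra)). fold a in H.
  destruct (alpha_qg M p ltac:(lra)) as [_ [_ [Eb _]]]. fold b in Eb.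
  pose proof (PS_le_lim p b 1 (S m) ltac:(lra) Eb).
  assert (E : PS q b m = PS q a m) by (apply PS_ext; auto).
  pose proof (PS_base_mono p q b m ltac:(lra)).
  simpl in H, H0.
  assert (Hi : INR (a m) + 1 <= INR (b m)) by (rewrite <- S_INR; apply le_INR; lia).
  pose proof (pow_lt q m ltac:(lra)). pose proof (pow_lt p m ltac:(lra)).
  assert (pm : p ^ m <= q ^ m) by (apply pow_incr; lra).
  assert (A1 : INR (b m) / (q * q ^ m) >= (INR (a m) + 1) / (q * q ^ m)).
  { apply Rle_ge. unfold Rdiv. apply Rmult_le_compat_r; auto. left; apply Rinv_0_lt_compat; nra. }
  assert (A2 : INR (b m) / (p * p ^ m) > INR (b m) / (q * q ^ m)).
  { assert (0 < INR (b m)) by (pose proof (pos_INR (a m)); lra).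
    unfold Rdiv. apply Rmult_lt_compat_l; auto. apply Rinv_lt_contravar. apply Rmult_lt_0_compat; apply Rmult_lt_0_compat; lra. nra. }
  assert (A3 : (INR (a m) + 1) / (q * q ^ m) = INR (a m) / (q * q ^ m) + / (q * q ^ m)) by (field; nra).
  lra.
Qed.

Lemma lower M p q N m : 1 < p <= INR M + 1 -> PS p (alpha M q) N < 1 -> (m < N)%nat ->
  (forall i, (i < m)%nat -> alpha M p i = alpha M q i) -> (alpha M q m <= alpha M p m)%nat.
Proof.
  intros Hp HN Hm Ha. apply Nat.nlt_ge. intro L.
  set (b := alpha M p) in *. set (a := alpha M q) in *.
  pose proof (alpha_tail M p (S m) Hp). fold b in H.
  assert (E : PS p b m = PS p a m) by (apply PS_ext; auto).
  pose proof (PS_mono p a (S m) N ltac:(lra) Hm).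
  simpl in H, H0.
  assert (Hi : INR (b m) + 1 <= INR (a m)) by (rewrite <- S_INR; apply le_INR; lia).
  pose proof (pow_lt p m ltac:(lra)).
  assert (A1 : INR (a m) / (p * p ^ m) >= (INR (b m) + 1) / (p * p ^ m)).
  { apply Rle_ge. unfold Rdiv. apply Rmult_le_compat_r; auto. left; apply Rinv_0_lt_compat; nra. }
  assert (A3 : (INR (b m) + 1) / (p * p ^ m) = INR (b m) / (p * p ^ m) + / (p * p ^ m)) by (field; nra).
  lra.
Qed.

Lemma PS_lt1 M q N : 1 < q <= INR M + 1 -> PS q (alpha M q) N < 1.
Proof.
  intros Hq. destruct (alpha_qg M q Hq) as [_ [Nz [E _]]].
  destruct (Nz N) as [m [Hm Cm]].
  pose proof (PS_mono q (alpha M q) N m ltac:(lra) Hm).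
  pose proof (PS_le_lim q (alpha M q) 1 (S m) ltac:(lra) E). simpl in H0.
  assert (0 < INR (alpha M q m) / (q * q ^ m)).
  { apply Rdiv_lt_0_compat. apply lt_0_INR; lia. pose proof (pow_lt q m ltac:(lra)). nra. }
  lra.
Qed.

Lemma PS_cont x N q : q > 0 -> continuity_pt (fun t => PS t x N) q.
Proof.
  intros Hq. induction N.
  - simpl. apply continuity_pt_const. intros a b; auto.
  - simpl. apply (continuity_pt_plus (fun t => PS t x N) (fun t => INR (x N) / (t * t ^ N))); auto.
    apply (continuity_pt_div (fun _ => INR (x N)) (fun t => t * t ^ N)).
    + apply continuity_pt_const. intros a b; auto.
    + apply (derivable_continuous_pt (fun t => t ^ (S N))). apply derivable_pt_pow.
    + pose proof (pow_lt q N Hq). nra.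
Qed.

Lemma p_lt_q (p : nat -> R) q : (forall n, p n < p (S n)) -> Un_cv p q -> forall n, p n < q.
Proof.
  intros Hinc Hcv.
  assert (Hmon : forall n m, (n <= m)%nat -> p n <= p m).
  { intros n m H. induction H. lra. specialize (Hinc m). lra. }
  assert (Hle : forall n, p n <= q).
  { intro n. apply Rnot_lt_le. intro L. destruct (Hcv (p n - q) ltac:(lra)) as [N HN].
    specialize (HN (max n N) ltac:(lia)). pose proof (Hmon n (max n N) ltac:(lia)).
    unfold R_dist in HN. apply Rabs_def2 in HN. lra. }
  intro n. specialize (Hinc n). specialize (Hle (S n)). lra.
Qed.

Lemma agree M q (p : nat -> R) N : 1 < q <= INR M + 1 ->
  (forall n, 1 < p n <= INR M + 1) -> (forall n, p n < p (S n)) -> Un_cv p q ->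
  exists n0, forall n, (n0 <= n)%nat -> forall i, (i < N)%nat -> alpha M (p n) i = alpha M q i.
Proof.
  intros Hq Hp Hinc Hcv.
  pose proof (continuity_seq _ p q (PS_cont (alpha M q) N q ltac:(lra)) Hcv) as C.
  pose proof (PS_lt1 M q N Hq).
  destruct (C (1 - PS q (alpha M q) N) ltac:(lra)) as [n0 Hn0].
  exists n0. intros n Hn.
  specialize (Hn0 n Hn). unfold R_dist in Hn0. apply Rabs_def2 in Hn0.
  assert (HN : PS (p n) (alpha M q) N < 1) by lra.
  pose proof (p_lt_q p q Hinc Hcv n).
  assert (forall i, (i <= N)%nat -> forall j, (j < i)%nat -> alpha M (p n) j = alpha M q j).
  { induction i; intros Hi j Hj. lia.
    assert (j < i \/ j = i)%nat as [J|J] by lia. apply IHi; auto; lia.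
    subst j. apply Nat.le_antisymm.
    - pose proof (Hp n). apply upper; try lra. apply IHi. lia.
    - apply (lower M (p n) q N); [apply Hp|exact HN|lia|]. apply IHi. lia. }
  intros i Hi. apply (H1 N); auto.
Qed.

Lemma lex_le_refl M x y : digit_seq M y -> lex_le x y -> lex_le (refl M y) (refl M x).
Proof.
  intros Dy [H|[n [Hn Ln]]].
  - left. intros i. unfold refl. rewrite H. auto.
  - right. exists n. split. intros i Hi. unfold refl. rewrite Hn; auto.
    unfold refl. specialize (Dy n). lia.
Qed.

Lemma refl_refl M b : digit_seq M b -> refl M (refl M b) = b.
Proof. intros D. apply functional_extensionality. intro i. unfold refl. specialize (D i). lia. Qed.

Definition Pw (M : nat) (a : nat -> nat) (w : list nat) (j : nat) : Prop :=
  (forall i, (i < length w - j)%nat -> nth (j + i) w 0%nat = a i) \/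
  (forall i, (i < length w - j)%nat -> nth (j + i) w 0%nat = (M - a i)%nat).

Lemma comb_core M a b c y k w j0 :
  (forall n, lex_le (refl M b) (shift n c) /\ lex_le (shift n c) b) ->
  digit_seq M c ->
  (forall i, (i < length w - j0)%nat -> nth (j0 + i) w 0%nat = c i) ->
  (j0 <= length w)%nat ->
  (forall j, (j < j0)%nat -> ~ Pw M a w j) ->
  (forall i, (i < length w)%nat -> b i = a i) ->
  digit_seq M y ->
  (forall n, lex_le (refl M a) (shift n y) /\ lex_le (shift n y) a) ->
  (forall i, (i < length w)%nat -> y (k + i)%nat = nth i w 0%nat) ->
  exists z, (digit_seq M z /\ forall n, lex_le (refl M b) (shift n z) /\ lex_le (shift n z) b)
            /\ occurs_in w z.
Proof.
  intros Hc Dc Hcw Hj0 Hmin Hab Dy Hy Hw.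
  set (N := length w) in *.
  set (z := fun i => if (i <? j0)%nat then nth i w 0%nat else c (i - j0)%nat).
  assert (Zw : forall i, (i < N)%nat -> z i = nth i w 0%nat).
  { intros i Hi. unfold z. destruct (Nat.ltb_spec i j0). auto.
    rewrite <- Hcw by lia. f_equal. lia. }
  assert (Zy : forall i, (i < N)%nat -> z i = y (k + i)%nat).
  { intros. rewrite Zw, Hw; auto. }
  exists z. split; [split|].
  - intro i. unfold z. destruct (Nat.ltb_spec i j0). rewrite <- Hw by lia. apply Dy. apply Dc.
  - intro n. destruct (Nat.lt_ge_cases n j0) as [L|L].
    + assert (nP := Hmin n L). destruct (Hy (k + n)%nat) as [Hlo Hup]. split.
      * right. destruct Hlo as [Heq|[t [Ht Lt]]].
        -- exfalso. apply nP. right. intros i Hi. rewrite <- Hw by lia.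
           specialize (Heq i); unfold shift, refl in Heq.
           replace (k + (n + i))%nat with (k + n + i)%nat by lia; lia.
        -- destruct (Nat.lt_ge_cases t (N - n)) as [T|T].
           ++ exists t. split.
              ** intros i Hi. unfold shift, refl. rewrite Zy by lia. rewrite Hab by lia.
                 specialize (Ht i Hi); unfold shift, refl in Ht.
                 replace (k + (n + i))%nat with (k + n + i)%nat by lia; lia.
              ** unfold shift, refl in *. rewrite Zy by lia. rewrite Hab by lia.
                 replace (k + (n + t))%nat with (k + n + t)%nat by lia. exact Lt.
           ++ exfalso. apply nP. right. intros i Hi. rewrite <- Hw by lia.
              specialize (Ht i ltac:(lia)); unfold shift, refl in Ht.
              replace (k + (n + i))%nat with (k + n + i)%nat by lia; lia.
      * right. destruct Hup as [Heq|[t [Ht Lt]]].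
        -- exfalso. apply nP. left. intros i Hi. rewrite <- Hw by lia.
           specialize (Heq i); unfold shift in Heq.
           replace (k + (n + i))%nat with (k + n + i)%nat by lia; lia.
        -- destruct (Nat.lt_ge_cases t (N - n)) as [T|T].
           ++ exists t. split.
              ** intros i Hi. unfold shift. rewrite Zy by lia. rewrite Hab by lia.
                 specialize (Ht i Hi); unfold shift in Ht.
                 replace (k + (n + i))%nat with (k + n + i)%nat by lia; lia.
              ** unfold shift in *. rewrite Zy by lia. rewrite Hab by lia.
                 replace (k + (n + t))%nat with (k + n + t)%nat by lia. exact Lt.
           ++ exfalso. apply nP. left. intros i Hi. rewrite <- Hw by lia.
              specialize (Ht i ltac:(lia)); unfold shift in Ht.
              replace (k + (n + i))%nat with (k + n + i)%nat by lia; lia.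
    + assert (E : shift n z = shift (n - j0) c).
      { apply functional_extensionality. intro i. unfold shift, z.
        destruct (Nat.ltb_spec (n + i) j0). lia. f_equal. lia. }
      rewrite E. apply Hc.
  - exists 0%nat. intros i Hi. apply Zw. auto.
Qed.

Theorem lemma3p4 (M : nat) (qKL q : R) (w : list nat) (p : nat -> R) :
  (1 <= M)%nat ->
  1 < qKL <= INR M + 1 ->
  (forall i, alpha M qKL i = lambdaKL M i) ->
  qKL < q <= INR M + 1 ->
  (exists y, Vq M q y /\ occurs_in w y) ->
  (forall n, 1 < p n <= INR M + 1) ->
  (forall n, p n < p (S n)) ->
  Un_cv p q ->
  (forall n, Vset M (alpha M (p n))) ->
  exists n0, forall n, (n0 <= n)%nat -> exists y, Vq M (p n) y /\ occurs_in w y.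
Proof.
  intros HM HKL _ Hq [y [[Dy Hy] [k Hk]]] Hp Hinc Hcv HV.
  assert (Hq' : 1 < q <= INR M + 1) by lra.
  destruct (agree M q p (length w) Hq' Hp Hinc Hcv) as [n0 Hn0].
  exists n0. intros n Hn. specialize (Hn0 n Hn).
  set (b := alpha M (p n)) in *. set (a := alpha M q) in *.
  destruct (HV n) as [Db Hb]. fold b in Db, Hb.
  assert (PN : Pw M a w (length w)). { left. intros i Hi. lia. }
  destruct (least (Pw M a w) _ PN) as [j0 [Pj0 Hmin]].
  assert (Hj0 : (j0 <= length w)%nat).
  { apply Nat.nlt_ge. intro L. exact (Hmin _ L PN). }
  unfold Vq. fold a b.
  destruct (classic (forall i, (i < length w - j0)%nat -> nth (j0 + i) w 0%nat = a i)) as [C|C].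
  - apply (comb_core M a b b y k w j0); auto.
    intros i Hi. rewrite C by auto. symmetry. apply Hn0. lia.
  - destruct Pj0 as [P1|P2]; [contradiction|].
    apply (comb_core M a b (refl M b) y k w j0); auto.
    + intro m. destruct (Hb m) as [H1 H2]. split.
      * apply lex_le_refl. intro i. apply Db. exact H2.
      * rewrite <- (refl_refl M b Db) at 2. apply lex_le_refl.
        intro i. unfold shift. apply Db. exact H1.
    + intro i. unfold refl. lia.
    + intros i Hi. rewrite P2 by auto. unfold refl. rewrite Hn0 by lia. auto.
Qed.
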